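(* Let $\mathcal{G}$ be a $k$-uniform hypergraph with $n$ vertices. Then for every $j\in V(\mathcal{G})$, \[ \alpha_j(\mathcal{G})\leq\frac{(k-1)d_j}{n-1}. \]
   Context: A $k$-uniform hypergraph $\mathcal{G}$ has vertex set $V(\mathcal{G})=[n]$ and edge set $E(\mathcal{G})$ of $k$-element subsets of $V(\mathcal{G})$; $d_j$ is the number of edges containing vertex $j$. For $\mathbf{x}\in\mathbb{R}^n$, $\mathcal{L}_\mathcal{G}\mathbf{x}^k=\sum_{\{i_1,\ldots,i_k\}\in E(\mathcal{G})}\left(x_{i_1}^k+\cdots+x_{i_k}^k-k\,x_{i_1}\cdots x_{i_k}\right)$; the inverse Perron value of vertex $j$ is $\alpha_j(\mathcal{G})=\min\{\mathcal{L}_\mathcal{G}\mathbf{x}^k : \mathbf{x}\in\mathbb{R}^n_+,\ \sum_{i=1}^n x_i^k=1,\ x_j=0\}$. *)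

(* Defs.v *)
From HB Require Import structures.
From mathcomp Require Import all_boot all_order all_algebra.
From mathcomp Require Import classical_sets reals.
Set Implicit Arguments. Unset Strict Implicit. Unset Printing Implicit Defensive.
Import Order.TTheory GRing.Theory Num.Theory.
Local Open Scope ring_scope.
Local Open Scope classical_set_scope.

Definition uniform_hypergraph (n k : nat) (E : {set {set 'I_n}}) : Prop :=
  forall e, e \in E -> #|e| = k.

Definition hdeg (n : nat) (E : {set {set 'I_n}}) (j : 'I_n) : nat :=
  #|[set e in E | j \in e]|.

Definition lapform (R : realType) (n k : nat) (E : {set {set 'I_n}})
    (x : 'I_n -> R) : R :=
  \sum_(e in E) ((\sum_(i in e) x i ^+ k) - k%:R * \prod_(i in e) x i).

Definition feasible (R : realType) (n k : nat) (j : 'I_n) (x : 'I_n -> R) : Prop :=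
  (forall i, 0 <= x i) /\ \sum_i x i ^+ k = 1 /\ x j = 0.

(* inverse Perron value alpha_j(G): the minimum (taken as the infimum, which is
   attained by compactness) of L_G x^k over feasible x *)
Definition alpha (R : realType) (n k : nat) (E : {set {set 'I_n}}) (j : 'I_n) : R :=
  inf [set lapform k E x | x in [set x | feasible k j x]].

(* Main.v *)
Require Import Defs.
From HB Require Import structures.
From mathcomp Require Import all_boot all_order all_algebra.
From mathcomp Require Import classical_sets reals exp.
Import Order.TTheory GRing.Theory Num.Theory.
Local Open Scope classical_set_scope.
Local Open Scope ring_scope.

Lemma lapform_value (R : realType) (n k : nat) (E : {set {set 'I_n}})
    (hk : (0 < k)%N) (hE : uniform_hypergraph k E) (j : 'I_n) (y c : R)
    (hy : y ^+ k = c) :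
  lapform k E (fun i => if i == j then 0 else y) =
  ((k%:R - 1) * c) *+ hdeg E j.
Proof.
case: k hk hE hy => // k _ hE hy.
rewrite /lapform /hdeg.
transitivity (\sum_(e in E) (if j \in e then (k.+1%:R - 1) * c else 0)).
  apply: eq_bigr => e eE.
  have he := hE e eE.
  case: ifP => je.
  - rewrite (bigD1 j) //= (bigD1 j (P := fun i => i \in e)) //= eqxx.
    rewrite mul0r mulr0 subr0 expr0n add0r.
    rewrite (eq_bigr (fun _ => c)); last by move=> i /andP [_ /negbTE ->].
    rewrite sumr_const.
    have := cardD1 j e; rewrite je he add1n => /eqP; rewrite eqSS => /eqP hc.
    rewrite (_ : #|_| = k); last first.
      by rewrite hc; apply: eq_card => i; rewrite !inE andbC.
    by rewrite -natr1 addrK mulr_natl.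
  - rewrite (eq_bigr (fun _ => c)); last first.
      move=> i ie; have /negbTE -> : i != j by apply/eqP => ij; rewrite -ij ie in je.
      by rewrite ?hy.
    rewrite [\prod_(i in e) _](eq_bigr (fun _ => y)); last first.
      move=> i ie; have /negbTE -> : i != j by apply/eqP => ij; rewrite -ij ie in je.
      by [].
    by rewrite sumr_const prodr_const he hy mulr_natl subrr.
rewrite -big_mkcondr /= sumr_const.
congr (_ *+ _); apply: eq_card => e; by rewrite inE.
Qed.

Lemma feasible_le1 (R : realType) (n k : nat) (j : 'I_n) (x : 'I_n -> R) :
  feasible k.+1 j x -> forall i, 0 <= x i <= 1.
Proof.
move=> [h0 [hs _]] i; rewrite h0 /=.
have hle : x i ^+ k.+1 <= 1.
  rewrite -hs (bigD1 i) //= lerDl; apply: sumr_ge0 => l _; exact: exprn_ge0.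
rewrite leNgt; apply/negP => h.
have := (expr_gte1 R).2 k.+1 (x i) (ltn0Sn k) (h0 i); rewrite h => h'.
by move: hle; rewrite leNgt h'.
Qed.

Theorem theorem3p6 (R : realType) (n k : nat) (E : {set {set 'I_n}})
    (hn : (1 < n)%N) (hE : uniform_hypergraph k E) (j : 'I_n) :
  alpha R k E j <= ((k%:R - 1) * (hdeg E j)%:R) / (n%:R - 1).
Proof.
case: k hE => [|k] hE.
  have hd : hdeg E j = 0%N.
    apply/eqP; rewrite cards_eq0; apply/eqP/setP => e; rewrite !inE.
    apply/negbTE/negP => /andP [eE je].
    by have := hE e eE; move/eqP; rewrite cards_eq0 => /eqP ee; rewrite ee inE in je.
  rewrite hd mulr0 mul0r /alpha.
  rewrite (_ : [set _ | x in _] = set0) ?inf0 //.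
  apply/seteqP; split => // r /= [x [_ [hs _]] _].
  move: hs; rewrite (eq_bigr (fun _ => 1)); last by move=> i _; rewrite expr0.
  rewrite sumr_const card_ord => /eqP.
  rewrite pnatr_eq1 => /eqP hn1; by rewrite hn1 in hn.
set c : R := (n%:R - 1)^-1.
have hn1 : 0 < n%:R - 1 :> R by rewrite subr_gt0 ltr1n.
have c0 : 0 <= c by rewrite /c invr_ge0 ltW.
set y : R := c `^ (k.+1%:R)^-1.
have hy : y ^+ k.+1 = c.
  rewrite /y -powR_mulrn ?powR_ge0 // -powRrM mulVf ?powRr1 //.
  by rewrite pnatr_eq0.
set x : 'I_n -> R := fun i => if i == j then 0 else y.
have fx : feasible k.+1 j x.
  split; first by move=> i; rewrite /x; case: ifP => // _; exact: powR_ge0.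
  split; last by rewrite /x eqxx.
  rewrite (bigD1 j) //= /x eqxx expr0n add0r.
  rewrite (eq_bigr (fun _ => c)); last by move=> i /negbTE ->.
  rewrite sumr_const cardC1 card_ord -mulr_natl /c.
  rewrite -(prednK (ltnW hn)) -natr1 addrK /= mulfV //.
  by rewrite pnatr_eq0 -lt0n -ltnS prednK ?(ltnW hn).
have hval := @lapform_value R n k.+1 E (ltn0Sn k) hE j y c hy.
rewrite /alpha.
have -> : (k.+1%:R - 1) * (hdeg E j)%:R / (n%:R - 1) = lapform k.+1 E x.
  by rewrite hval -/c mulrAC mulr_natr.
apply: ge_inf; last by exists x.
exists (\sum_(e in E) (- k.+1%:R : R)) => r [z fz <-].
apply: ler_sum => e _.
rewrite -[X in X <= _]add0r lerD //.
  apply: sumr_ge0 => i _; apply: exprn_ge0; exact: (fz.1 i).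
rewrite lerN2 ler_piMr ?ler0n //.
apply: prodr_ile1 => i _; exact: feasible_le1 fz i.
Qed.
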